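(* Let $(D,D_{t'})$ be a proper pair (with $t'\geq 1$) such that the unrolled DAG $D_{t'}$ has no contemporaneous edges, and assume that the $d$-separation Markov property holds in $D_{t'}$ for the time series with baseline variables $X$ with index sets $(V,W)$. Let $A,B,C\subseteq V\cup W$ be pairwise disjoint with $B\subseteq V$. If $B$ is $\delta$-separated from $A$ given $C$ in $D$, then $X^B$ is locally independent of $X^A$ given $X^C$ until time $t'$.
   Context: Time series with baseline variables: $V$ and $W$ are finite disjoint index sets. $X=\{X_t\}_{t\ge 0}$ is a stochastic process such that $X_0$ is a random vector with entries indexed by $V\cup W$ (coordinate processes at time $0$ together with baseline variables) and, for $t\geq 1$, $X_t$ is a random vector with entries indexed by $V$. For $A\subseteq V\cup W$, $X_t^A$ is the subvector indexed by $A$ and $\overline X_t^A=\{X_s^i: i\in A, s\le t\}$ (a baseline variable $i\in W$ only appears at $s=0$). Local independence (Granger non-causality): for pairwise disjoint $A,B,C\subseteq V\cup W$ with $B\subseteq V$, $X^B$ is locally independent of $X^A$ given $X^C$ until time $t'$ if for every $t=1,\dots,t'$, $\overline X^A_{t-1}$ and $X^B_t$ are conditionally independent given $\overline X^{B\cup C}_{t-1}$. Graphs: a directed graph (DG) has node set and directed edges $i\to j$ (at most one edge from $i$ to $j$; both $i\to j$ and $j\to i$ may occur; self-loops allowed). A walk is an alternating sequence of nodes and edges with each edge between consecutive nodes; a path is a walk with no repeated node. A non-endpoint node $k$ on a path is a collider if both adjacent edges have heads at $k$ ($\to k\leftarrow$), otherwise a noncollider. $\mathrm{an}(C)$ is the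 set of nodes $k$ having a directed path to some node of $C$ with $k\ne$ that node; $\mathrm{an}^{+}(C)=\mathrm{an}(C)\cup C$. A DAG is a DG without directed cycles. $\delta$-separation: for a DG $D$ on $V\cup W$ and $B\subseteq V\cup W$, $D^B$ is obtained from $D$ by deleting every edge $i\to j$ with $i\in B$. For disjoint $A,B,C$, $B$ is $\delta$-separated from $A$ given $C$ in $D$ if every path in $D^B$ between a node of $A$ and a node of $B$ contains a noncollider in $C$ or a collider not in $\mathrm{an}_D(C)\cup C$ (ancestors computed in $D$). $d$-separation in a DAG is the same condition applied to paths in the DAG itself (no edge deletion), and is symmetric. Unrolling: for a DG $D$ on $V\cup W$ ($W$ = baseline nodes), its unrolled version on $t'$ lags is the DAG $D_{t'}$ on nodes $V^{t'}\cup W^{t'}$, $V^{t'}=\bigcup_{i\in V}\{\nu_0^i,\dots,\nu_{t'}^i\}$, $W^{t'}=\{\nu_0^i:i\in W\}$, with $\nu_s^i\to\nu_t^j$ iff $s<t$ and $i\to j$ in $D$. Rolling: for a DAG $D_{t'}$ on such a node set, its rolled version is the DG $D$ on $V\cup W$ with $i\to j$ iff $\nu_s^i\to\nu_t^j$ in $D_{t'}$ for some $s<t$. An edge $\nu_s^i\to\nu_t^j$ is contemporaneous if $s=t$. The pair $(D,D_{t'})$ is proper if $D$ is the rolled version of $D_{t'}$ or $D_{t'}$ is the unrolled version of $D$. Node $\nu_s^i$ represents the random variable $X_s^i$; for a node set $a$, $x^a$ is the corresponding set of variables; $\nu_t^A=\{\nu_t^i:i\in A\}$, $\bar\nu_t^A=\{\nu_s^i:i\in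 A,s\le t\}$. The $d$-separation Markov property holds in $D_{t'}$ if for all disjoint node sets $a,b,c$, $a$ and $b$ $d$-separated by $c$ in $D_{t'}$ implies $x^a$ and $x^b$ conditionally independent given $x^c$. *)

(* Defs.v *)
From HB Require Import structures.
From mathcomp Require Import all_boot all_order all_algebra.
From mathcomp Require Import all_classical all_reals all_analysis.
Set Implicit Arguments. Unset Strict Implicit. Unset Printing Implicit Defensive.
Import Order.TTheory GRing.Theory Num.Theory.
Local Open Scope ring_scope.

Section Graphs.
Variable N : finType.

(* A walk starting at x is a list of steps (b, y): b = true means the edge
   prev -> y is used, b = false means the edge prev <- y (i.e. y -> prev). *)
Fixpoint walk_ok (e : rel N) (x : N) (s : seq (bool * N)) : bool :=
  match s with
  | [::] => true
  | (b, y) :: s' => (if b then e x y else e y x) && walk_ok e y s'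
  end.

Definition walk_nodes (x : N) (s : seq (bool * N)) : seq N := x :: map snd s.

Definition walk_end (x : N) (s : seq (bool * N)) : N := last x (map snd s).

Definition is_path (e : rel N) (x : N) (s : seq (bool * N)) : bool :=
  walk_ok e x s && uniq (walk_nodes x s).

(* non-endpoint nodes k with (incoming-edge orientation, outgoing-edge
   orientation): b1 = true iff the edge before k points into k,
   b2 = true iff the edge after k points away from k *)
Fixpoint internal_aux (st : bool * N) (s : seq (bool * N)) : seq (N * bool * bool) :=
  match s with
  | [::] => [::]
  | (b2, y) :: s' => (st.2, st.1, b2) :: internal_aux (b2, y) s'
  end.

Definition internal (s : seq (bool * N)) : seq (N * bool * bool) :=
  match s with [::] => [::] | st :: s' => internal_aux st s' end.

Definition collider (b1 b2 : bool) : bool := b1 && ~~ b2.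

Definition anc (e : rel N) (C : {set N}) : {set N} :=
  [set k | [exists c in C, (k != c) && connect e k c]].

Definition blocked (eA : rel N) (C : {set N}) (s : seq (bool * N)) : bool :=
  has (fun q : N * bool * bool =>
         let: (k, b1, b2) := q in
         if collider b1 b2 then k \notin (anc eA C :|: C) else k \in C)
      (internal s).

Definition dsep (e : rel N) (A B C : {set N}) : Prop :=
  forall (a : N) (s : seq (bool * N)), a \in A -> walk_end a s \in B ->
    is_path e a s -> blocked e C s.

Definition del_out (e : rel N) (B : {set N}) : rel N :=
  fun i j => (i \notin B) && e i j.

Definition deltasep (e : rel N) (A B C : {set N}) : Prop :=
  forall (a : N) (s : seq (bool * N)), a \in A -> walk_end a s \in B ->
    is_path (del_out e B) a s -> blocked e C s.

Definition acyclic (e : rel N) : Prop := forall u v, e u v -> ~~ connect e v u.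
End Graphs.

(* Unrolled node set V^{t'} u W^{t'}: coordinate i at time s <= t',     *)
(* baseline nodes (i in W) only at time 0.                             *)
Definition unode (I : finType) (W : {set I}) (tp : nat) : finType :=
  {p : I * 'I_tp.+1 | (p.1 \notin W) || (val p.2 == 0%N)}.

Definition ucoord (I : finType) (W : {set I}) (tp : nat) (u : @unode I W tp) : I := (val u).1.
Definition utime (I : finType) (W : {set I}) (tp : nat) (u : @unode I W tp) : nat := val (val u).2.

Definition ts_dag (I : finType) (W : {set I}) (tp : nat) (Dt : rel (@unode I W tp)) : Prop :=
  acyclic Dt /\ (forall u v, Dt u v -> (utime u <= utime v)%N).

Definition no_contemporaneous (I : finType) (W : {set I}) (tp : nat) (Dt : rel (@unode I W tp)) : Prop :=
  forall u v, Dt u v -> utime u != utime v.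

Definition rolled (I : finType) (W : {set I}) (tp : nat) (Dt : rel (@unode I W tp)) (D : rel I) : Prop :=
  forall i j, D i j = [exists u, exists v,
    [&& Dt u v, ucoord u == i, ucoord v == j & (utime u < utime v)%N]].

Definition unrolled (I : finType) (W : {set I}) (tp : nat) (D : rel I) (Dt : rel (@unode I W tp)) : Prop :=
  forall u v, Dt u v = ((utime u < utime v)%N && D (ucoord u) (ucoord v)).

Definition proper_pair (I : finType) (W : {set I}) (tp : nat) (D : rel I) (Dt : rel (@unode I W tp)) : Prop :=
  rolled Dt D \/ unrolled D Dt.

Section CI.
Local Open Scope classical_set_scope.
Context {d : measure_display} {T : measurableType d} {R : realType}.
Variable P : probability T R.

Definition sigma_of (K : Type) (Y : K -> T -> R) (a : set K) : set (set T) :=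
  <<s [set E | exists k, a k /\ exists U : set R, measurable U /\ E = Y k @^-1` U] >>.

(* (Y k)_{k in a} and (Y k)_{k in b} are conditionally independent given
   (Y k)_{k in c}: for every event E in sigma(Y^a), the conditional
   probability P(E | Y^b, Y^c) admits a sigma(Y^c)-measurable version *)
Definition cond_indep (K : Type) (Y : K -> T -> R) (a b c : set K) : Prop :=
  forall E, sigma_of Y a E ->
    exists h : T -> R,
      (forall U : set R, measurable U -> sigma_of Y c (h @^-1` U)) /\
      (forall w, 0 <= h w <= 1) /\
      (forall H, sigma_of Y (b `|` c) H ->
          P (E `&` H) = (\int[P]_(w in H) (h w)%:E)%E).
End CI.

Section TS.
Local Open Scope classical_set_scope.
Context {d : measure_display} {T : measurableType d} {R : realType}.
Variable P : probability T R.
Variables (I : finType) (W : {set I}).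
(* X i s = X_s^i; for i in W (baseline) only s = 0 is meaningful *)
Variable X : I -> nat -> {RV P >-> R}.

Definition Xfam (p : I * nat) : T -> R := X p.1 p.2.

Definition past (A : {set I}) (t : nat) : set (I * nat) :=
  [set p | p.1 \in A /\ (p.2 <= t)%N /\ (p.1 \in W -> p.2 = 0%N)].

Definition present (B : {set I}) (t : nat) : set (I * nat) :=
  [set p | p.1 \in B /\ p.2 = t].

Definition loc_indep (A B C : {set I}) (tp : nat) : Prop :=
  forall t, (1 <= t <= tp)%N ->
    cond_indep P Xfam (past A t.-1) (present B t) (past (B :|: C) t.-1).

Definition Xnode (tp : nat) (u : @unode I W tp) : T -> R := X (ucoord u) (utime u).

Definition dsep_markov (tp : nat) (Dt : rel (@unode I W tp)) : Prop :=
  forall a b c : {set @unode I W tp},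
    a :&: b = finset.set0 -> a :&: c = finset.set0 -> b :&: c = finset.set0 ->
    dsep Dt a b c ->
    cond_indep P (@Xnode tp) (fun u => u \in a) (fun u => u \in b) (fun u => u \in c).
End TS.

(* Main.v *)
Require Import Defs.
From HB Require Import structures.
From mathcomp Require Import all_boot all_order all_algebra.
From mathcomp Require Import all_classical all_reals all_analysis.
Set Implicit Arguments. Unset Strict Implicit. Unset Printing Implicit Defensive.

Definition condP (N : finType) (C : {set N}) (eD : rel N) (q : N * bool * bool) : bool :=
  let: (k, b1, b2) := q in
  if collider b1 b2 then [exists z in C, connect eD k z] else k \notin C.

Lemma walk_ok_cat (N : finType) (e : rel N) x s1 s2 :
  walk_ok e x (s1 ++ s2) = walk_ok e x s1 && walk_ok e (walk_end x s1) s2.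
Proof.
elim: s1 x => [|[b y] s1 IH] x //=.
by rewrite IH andbA.
Qed.

Lemma internal_aux_cat (N : finType) (st st2 : bool * N) s1 s2 :
  internal_aux st (s1 ++ st2 :: s2) = internal_aux st (rcons s1 st2) ++ internal_aux st2 s2.
Proof.
case: st2 => b2 y2.
elim: s1 st => [|[b y] s1 IH] st /=; first by [].
by rewrite IH.
Qed.

Lemma split_last (N : finType) (x : N) (s : seq (bool * N)) :
  x \in map snd s -> exists s1 b s2, s = s1 ++ (b, x) :: s2 /\ x \notin map snd s2.
Proof.
elim: s => [|[b y] s IH] //=.
rewrite in_cons => hx.
case: (boolP (x \in map snd s)) => [hin|Hn].
  have [s1 [b1 [s2 [E H]]]] := IH hin.
  by exists ((b, y) :: s1), b1, s2; rewrite E.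
move: hx; rewrite (negPf Hn) orbF => Exy.
by exists [::], b, s; rewrite (eqP Exy) in Hn *.
Qed.

Lemma fwd_back (N : finType) (e eD : rel N) (C : {set N}) :
  subrel e eD ->
  forall x l, walk_ok e x l -> has (fun st => ~~ st.1) l ->
  all (condP C eD) (internal_aux (true, x) l) -> [exists z in C, connect eD x z].
Proof.
move=> sub x l; elim: l x => [|[b y] l IH] x //=.
case: b => /=.
  move=> /andP [exy wl] hl /andP [_ ha].
  have /existsP [z /andP [zC cz]] := IH y wl hl ha.
  apply/existsP; exists z; rewrite zC /=.
  by apply: connect_trans cz; apply: connect1; apply: sub.
by move=> _ _ /andP [].
Qed.

Lemma L1 (N : finType) (e eD : rel N) (C B : {set N}) :
  subrel e eD ->
  forall n bp x s, size s <= n -> walk_ok e x s ->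
  all (condP C eD) (internal_aux (bp, x) s) -> walk_end x s \in B ->
  exists s', [/\ walk_ok e x s', uniq (walk_nodes x s'),
     all (condP C eD) (internal_aux (bp, x) s'), walk_end x s' \in B &
     {subset walk_nodes x s' <= walk_nodes x s}].
Proof.
move=> sub; elim=> [|n IH] bp x s.
  rewrite leqn0 => /nilP -> _ _ hB; exists [::]; split => //.
case: (boolP (x \in map snd s)) => [xin|xnin].
  have [s1 [b [s2 [Es xn2]]]] := split_last xin.
  move=> hs wl ha hB.
  have wl2 : walk_ok e x s2.
    by move: wl; rewrite Es walk_ok_cat => /andP [_] /= /andP [].
  have ha2 : all (condP C eD) (internal_aux (bp, x) s2).
    case Es2 : s2 => [|[c w] s2'] //=.
    move: (ha); rewrite Es Es2 internal_aux_cat all_cat => /andP [_] /= /andP [hxb ->].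
    rewrite andbT.
    move: hxb; rewrite /condP /collider => hxb.
    case: bp ha => ha; case: c Es2 hxb => Es2 hxb /=.
    - by rewrite andbF in hxb.
    - apply: (fwd_back sub wl) => //.
      apply/hasP; exists (false, w); last by []. by rewrite Es Es2 mem_cat !in_cons eqxx !orbT.
    - by rewrite andbF in hxb.
    - move: hxb; case: (b) => //= _.
      by move: ha; rewrite Es; case: (s1) => [|[b0 y0] s0] /= /andP [] H1 _; move: H1; rewrite /condP /collider /=.
  have hB2 : walk_end x s2 \in B.
    by move: hB; rewrite Es /walk_end map_cat last_cat.
  have hs2 : size s2 <= n.
    by move: hs; rewrite Es size_cat /= addnS ltnS; apply: leq_trans; apply: leq_addl.
  have [s' [w1 w2 w3 w4 w5]] := IH bp x s2 hs2 wl2 ha2 hB2.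
  exists s'; split => // z /w5; rewrite /walk_nodes !in_cons => /orP [->//|zin].
  by rewrite Es map_cat mem_cat /= in_cons zin !orbT.
case: s xnin => [|[b y] s] xnin.
  by move=> _ _ _ hB; exists [::]; split.
rewrite /= ltnS => hs /andP [exy wl] /andP [hx ha] hB.
have [s' [w1 w2 w3 w4 w5]] := IH b y s hs wl ha hB.
exists ((b, y) :: s'); split => //=.
- by rewrite exy.
- move: w2; rewrite /walk_nodes /= => /andP [-> ->]; rewrite !andbT; apply/negP => /w5; rewrite /walk_nodes; apply/negP; exact: xnin.
- by rewrite hx.
- move=> z; rewrite /walk_nodes /= !in_cons => /orP [->//|] /w5.
  by rewrite /walk_nodes in_cons => ->; rewrite orbT.
Qed.

Lemma dirpath (N : finType) (D : rel N) (B C : {set N}) x p :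
  path D x p -> last x p \in B -> ~~ [exists z in C, connect D x z] ->
  exists s, [/\ walk_ok (del_out D B) x s,
     all (condP C D) (internal_aux (true, x) s) & walk_end x s \in B].
Proof.
elim: p x => [|y p IH] x /=.
  by move=> _ hB _; exists [::]; split.
move=> /andP [Dxy hp] hB hn.
case: (boolP (x \in B)) => xB.
  by exists [::]; split.
have hny : ~~ [exists z in C, connect D y z].
  apply/negP => /existsP [z /andP [zC cz]]; move/negP: hn; apply.
  apply/existsP; exists z; rewrite zC /=; apply: connect_trans cz; exact: connect1.
have [s [w1 w2 w3]] := IH y hp hB hny.
exists ((true, y) :: s); split => //=.
- by rewrite /del_out xB Dxy.
- rewrite w2 andbT /condP /collider /=; apply/negP => xC; move/negP: hn; apply.
  by apply/existsP; exists x; rewrite xC connect0.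
Qed.

Lemma L2 (N : finType) (D : rel N) (B C : {set N}) :
  forall bp x s, walk_ok (del_out D B) x s ->
  all (condP (B :|: C) D) (internal_aux (bp, x) s) -> walk_end x s \in B ->
  exists s', [/\ walk_ok (del_out D B) x s',
     all (condP C D) (internal_aux (bp, x) s') & walk_end x s' \in B].
Proof.
move=> bp x s; elim: s bp x => [|[b y] s IH] bp x /=.
  by move=> _ _ hB; exists [::]; split.
move=> /andP [exy wl] /andP [hx ha] hB.
have rec : (if collider bp b then [exists z in C, connect D x z] else x \notin C) ->
  exists s', [/\ walk_ok (del_out D B) x s',
     all (condP C D) (internal_aux (bp, x) s') & walk_end x s' \in B].
  move=> hc; have [s' [w1 w2 w3]] := IH b y wl ha hB.
  exists ((b, y) :: s'); split => //=.
  - by rewrite exy w1.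
  - by rewrite w2 andbT /condP.
move: hx; rewrite /condP; case: ifP => hcol.
  case: (boolP [exists z in C, connect D x z]) => hz; first by move=> _; apply: rec; rewrite hcol.
  move=> /existsP [z /andP [zBC cz]].
  have zB : z \in B.
    move: zBC; rewrite finset.in_setU => /orP [//|zC].
    by move/negP: hz; case; apply/existsP; exists z; rewrite zC.
  have bpt : bp = true by move: hcol; rewrite /collider => /andP [].
  have [p hp Ez] := connectP cz.
  rewrite bpt; apply: (dirpath hp) => //; by rewrite -Ez.
rewrite finset.in_setU negb_or => /andP [_ xC]; apply: rec; by rewrite hcol.
Qed.

Lemma graph_final (N : finType) (D : rel N) (A B C : {set N}) x s :
  deltasep D A B C -> x \in A -> walk_ok (del_out D B) x s ->
  all (condP (B :|: C) D) (internal_aux (false, x) s) -> walk_end x s \in B -> False.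
Proof.
move=> hd xA wl ha hB.
have [s2 [w1 w2 w3]] := L2 wl ha hB.
have sub : subrel (del_out D B) D by move=> i j H; move: H; rewrite /del_out; case/andP.
have [s3 [v1 v2 v3 v4 _]] := L1 sub (leqnn (size s2)) w1 w2 w3.
have := hd x s3 xA v4; rewrite /is_path v1 v2 => /(_ isT).
rewrite /blocked; apply/negP; rewrite -all_predC.
case: s3 {v1 v2 v4} v3 => [|[b y] s3] //= /andP [_].
apply: sub_all => -[[k b1] b2] /=; rewrite /condP.
case: (collider b1 b2) => //.
move=> /existsP [z /andP [zC cz]]; rewrite negbK finset.in_setU.
case: (eqVneq k z) => [->|kz]; first by rewrite zC orbT.
apply/orP; left; rewrite /anc inE; apply/existsP; exists z; by rewrite zC kz cz.
Qed.

Lemma connect_time (N' I : finType) (coord : N' -> I) (time : N' -> nat) (Dt : rel N') (D : rel I) :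
  (forall u v, Dt u v -> time u < time v /\ D (coord u) (coord v)) ->
  forall u w, connect Dt u w -> time u <= time w /\ connect D (coord u) (coord w).
Proof.
move=> hE u w /connectP [p hp ->]; elim: p u hp => [|v p IH] u /=.
  by move=> _; split => //; exact: connect0.
move=> /andP [huv hp]; have [h1 h2] := hE _ _ huv; have [h3 h4] := IH v hp.
split; first by apply: leq_trans h3; apply: ltnW.
by apply: connect_trans h4; apply: connect1.
Qed.

Definition condT (N' : finType) (Dt : rel N') (c : {set N'}) (q : N' * bool * bool) : bool :=
  let: (k, b1, b2) := q in
  if collider b1 b2 then k \in (anc Dt c :|: c) else k \notin c.

Lemma asc (N' : finType) (time : N' -> nat) (Dt : rel N') (c : {set N'}) (t : nat) :
  (forall u v, Dt u v -> time u < time v) ->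
  (forall k, k \in anc Dt c :|: c -> time k < t) ->
  forall x s, walk_ok Dt x s -> t <= time x ->
  all (condT Dt c) (internal_aux (true, x) s) -> s != [::] -> t < time (walk_end x s).
Proof.
move=> hE hA x s; elim: s x => [|[b y] s IH] x //= + + + _.
case: b => /=.
  move=> /andP [hxy wl] tx /andP [_ ha].
  have ty : t < time y by apply: leq_ltn_trans tx (hE _ _ hxy).
  case: s IH wl ha => [|st s] IH wl ha; first by [].
  by apply: (IH y wl (ltnW ty) ha).
move=> _ tx /andP [hx _]; move: hx; rewrite /condT /collider /= => /hA.
by rewrite ltnNge tx.
Qed.

Lemma proj (N' I : finType) (coord : N' -> I) (time : N' -> nat) (Dt : rel N') (D : rel I)
  (B C : {set I}) (c : {set N'}) (t : nat) :
  (forall u v, Dt u v -> time u < time v /\ D (coord u) (coord v)) ->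
  (forall u, (u \in c) = (coord u \in B :|: C) && (time u < t)) ->
  forall x bp s, walk_ok Dt x s -> all (condT Dt c) (internal_aux (bp, x) s) ->
  (time x < t \/ (bp /\ t <= time x)) -> time (walk_end x s) = t ->
  walk_ok (del_out D B) (coord x) (map (fun st => (st.1, coord st.2)) s) /\
  all (condP (B :|: C) D) (internal_aux (bp, coord x) (map (fun st => (st.1, coord st.2)) s)).
Proof.
move=> hE hc.
have hA : forall k, k \in anc Dt c :|: c -> time k < t /\ [exists z in B :|: C, connect D (coord k) z].
  move=> k; rewrite finset.in_setU => /orP [|kc].
    rewrite /anc inE => /existsP [w /andP [wc /andP [_ cw]]].
    have [h1 h2] := connect_time hE cw.
    move: wc; rewrite hc => /andP [wBC wt].
    split; first by apply: leq_ltn_trans h1 wt.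
    by apply/existsP; exists (coord w); rewrite wBC.
  move: (kc); rewrite hc => /andP [kBC kt]; split => //.
  by apply/existsP; exists (coord k); rewrite kBC connect0.
have hnc : forall u, u \notin c -> time u < t -> coord u \notin B :|: C.
  by move=> u; rewrite hc negb_and => /orP [-> //|/negP h /h].
have hE1 : forall u v, Dt u v -> time u < time v by move=> u v /hE [].
have hA1 : forall k, k \in anc Dt c :|: c -> time k < t by move=> k /hA [].
move=> x bp s; elim: s x bp => [|[b y] s IH] x bp //=.
move=> /andP [hxy wl] /andP [hx ha] hinv hend.
have tx : time x < t.
  case: hinv => [//|[bpt tle]]; rewrite bpt in hx.
  have := asc hE1 hA1 (x := x) (s := (b, y) :: s); rewrite /= hxy wl hx ha hend ltnn.
  by move=> /(_ isT tle isT isT).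
have hyinv : time y < t \/ (b /\ t <= time y).
  case: (b) hxy => hxy; last by left; apply: ltn_trans tx; apply: hE1.
  by case: (ltnP (time y) t); [left|right].
have hend' : time (walk_end y s) = t by [].
clear hend.
have [IH1 IH2] := IH y b wl ha hyinv hend'.
rewrite IH1 IH2 !andbT; split.
  case: b hxy hx ha {IH1 IH2 hyinv} => hxy hx ha.
    have xc : x \notin c by move: hx; rewrite /condT /collider andbF.
    have := hnc x xc tx; rewrite finset.in_setU negb_or => /andP [xB _].
    by rewrite /del_out xB (hE _ _ hxy).2.
  have ty : time y < t by apply: ltn_trans tx; apply: hE1.
  case: s ha hend' {IH wl} => [|[b' y'] s] /=.
    by move=> _ hend; move: ty; rewrite /walk_end /= hend ltnn.
  move=> /andP [hy _] _.
  have yc : y \notin c by move: hy; rewrite /condT /collider.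
  have := hnc y yc ty; rewrite finset.in_setU negb_or => /andP [yB _].
  by rewrite /del_out yB (hE _ _ hxy).2.
move: hx; rewrite /condT /condP; case: (collider bp b).
  by move=> /hA [].
by move=> xc; apply: hnc.
Qed.

Lemma walk_end_map (N' I : finType) (coord : N' -> I) x (s : seq (bool * N')) :
  walk_end (coord x) (map (fun st => (st.1, coord st.2)) s) = coord (walk_end x s).
Proof. by elim: s x => [|[b y] s IH] x //=; rewrite /walk_end /= -IH. Qed.

Lemma disjF (N : finType) (A B : {set N}) i : [disjoint A & B] -> i \in A -> i \in B -> False.
Proof.
move=> /disjoint_setI0 h iA iB.
have : i \in A :&: B by rewrite finset.in_setI iA iB.
by rewrite h finset.in_set0.
Qed.

Section Meas.
Local Open Scope classical_set_scope.

Lemma ci_transfer (d : measure_display) (T : measurableType d) (R : realType) (P : probability T R)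
  (K K' : Type) (Y : K -> T -> R) (Y' : K' -> T -> R) a b c a' b' c' :
  sigma_of Y a = sigma_of Y' a' -> sigma_of Y c = sigma_of Y' c' ->
  sigma_of Y (b `|` c) = sigma_of Y' (b' `|` c') ->
  cond_indep P Y a b c -> cond_indep P Y' a' b' c'.
Proof.
move=> ea ec ebc H E hE; rewrite -ea in hE; have [h [h1 [h2 h3]]] := H E hE.
exists h; split; last split => //.
  by move=> U mU; rewrite -ec; exact: h1.
by move=> H' hH; apply: h3; rewrite ebc.
Qed.

Definition corr (I : finType) (W : {set I}) (tp : nat) (S' : set (unode W tp)) (S : set (I * nat)) :=
  (forall u, S' u -> S (ucoord u, utime u)) /\
  (forall k, S k -> exists u, S' u /\ (ucoord u, utime u) = k).

Lemma corrU (I : finType) (W : {set I}) (tp : nat) S1' S1 S2' S2 :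
  @corr I W tp S1' S1 -> corr S2' S2 -> corr (S1' `|` S2') (S1 `|` S2).
Proof.
move=> [h1 h2] [g1 g2]; split.
  by move=> u [/h1|/g1]; [left|right].
move=> k [/h2 [u [? ?]]|/g2 [u [? ?]]]; exists u; split => //; [left|right] => //.
Qed.

Lemma sigma_corr (d : measure_display) (T : measurableType d) (R : realType) (P : probability T R)
  (I : finType) (W : {set I}) (X : I -> nat -> {RV P >-> R}) (tp : nat) S' S :
  @corr I W tp S' S -> sigma_of (Xnode X (tp := tp)) S' = sigma_of (Xfam X) S.
Proof.
move=> [h1 h2]; rewrite /sigma_of; f_equal.
apply/seteqP; split => E /= [k [Sk [U [mU ->]]]].
  by exists (ucoord k, utime k); split; [exact: h1|]; exists U.
have [u [Su Eu]] := h2 k Sk; exists u; split => //; exists U; split => //.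
by rewrite -Eu.
Qed.
End Meas.

Unset Implicit Arguments.

Theorem proposition1 (d : measure_display) (T : measurableType d) (R : realType)
  (P : probability T R) (I : finType) (W : {set I})
  (X : I -> nat -> {RV P >-> R}) (tp : nat) (D : rel I) (Dt : rel (@unode I W tp))
  (A B C : {set I}) :
  (1 <= tp)%N ->
  ts_dag Dt -> proper_pair D Dt -> no_contemporaneous Dt ->
  dsep_markov X Dt ->
  [disjoint A & B] -> [disjoint A & C] -> [disjoint B & C] ->
  B \subset ~: W ->
  deltasep D A B C ->
  loc_indep W X A B C tp.
Proof.
move=> _ [_ hmono] hpp hnc hmk hAB hAC hBC hBW hds t /andP [t1 ttp].
have hE : forall u v, Dt u v -> (utime u < utime v)%N /\ D (ucoord u) (ucoord v).
  move=> u v huv.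
  have lt : (utime u < utime v)%N by rewrite ltn_neqAle hnc // hmono.
  split => //; case: hpp => [hr|hu].
    rewrite hr; apply/existsP; exists u; apply/existsP; exists v; by rewrite huv !eqxx lt.
  by move: huv; rewrite hu => /andP [].
pose a := [set u : unode W tp | (ucoord u \in A) && (utime u < t)%N].
pose b := [set u : unode W tp | (ucoord u \in B) && (utime u == t)].
pose c := [set u : unode W tp | (ucoord u \in B :|: C) && (utime u < t)%N].
have hc : forall u, (u \in c) = (ucoord u \in B :|: C) && (utime u < t)%N by move=> u; rewrite inE.
have hdsep : dsep Dt a b c.
  move=> x s xa eb /andP [wl _]; apply/negPn/negP => nb.
  have hall : all (condT Dt c) (internal s).
    move: nb; rewrite /blocked -all_predC; apply: sub_all => -[[k b1] b2] /=.
    by rewrite /condT; case: (collider b1 b2); rewrite ?negbK.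
  move: xa; rewrite inE => /andP [xA xt].
  have xc : x \notin c.
    rewrite hc negb_and; apply/orP; left; apply/negP => h.
    move: h; rewrite finset.in_setU => /orP [] h; [exact: (disjF hAB xA h)|exact: (disjF hAC xA h)].
  have hall2 : all (condT Dt c) (internal_aux (false, x) s).
    by case: s {wl eb nb} hall => [|[b0 y0] s] //= ->; rewrite andbT /condT /collider.
  move: eb; rewrite inE => /andP [eB /eqP et].
  have [w1 w2] := proj hE hc wl hall2 (or_introl xt) et.
  apply: (graph_final hds xA w1 w2); by rewrite walk_end_map.
have hdisj1 : a :&: b = finset.set0.
  apply/finset.setP => u; rewrite !inE.
  by case: (utime u == t) / eqP => [->|]; rewrite ?ltnn !andbF.
have hdisj2 : a :&: c = finset.set0.
  apply/finset.setP => u; rewrite !inE; apply/negP => /andP [/andP [uA _] /andP [h _]].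
  by move: h => /orP [] h; [exact: (disjF hAB uA h)|exact: (disjF hAC uA h)].
have hdisj3 : b :&: c = finset.set0.
  apply/finset.setP => u; rewrite !inE.
  by case: (utime u == t) / eqP => [->|]; rewrite ?ltnn !andbF.
have H := hmk a b c hdisj1 hdisj2 hdisj3 hdsep.
have mk : forall i s, (s < t.+1)%N -> (i \notin W) || (s == 0%N) ->
    exists u : unode W tp, (ucoord u, utime u) = (i, s).
  move=> i s st hp.
  have hs : (s < tp.+1)%N by apply: leq_trans st _.
  by exists (exist _ (i, Ordinal hs) hp).
have vW : forall u : unode W tp, ucoord u \in W -> utime u = 0%N.
  move=> u iW; have := valP u; rewrite /ucoord in iW; rewrite iW /= => /eqP.
  by [].
have hpW : forall i s, (i \in W -> s = 0%N) -> (i \notin W) || (s == 0%N).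
  by move=> i s; case: (i \in W) => //= h; apply/eqP; apply: h.
have ca : forall Z : {set I}, corr (fun u => u \in [set u : unode W tp | (ucoord u \in Z) && (utime u < t)%N])
   (past W Z t.-1).
  move=> Z; split.
    move=> u; rewrite inE => /andP [uA ut]; split => //=; split.
      by rewrite -ltnS prednK.
    exact: vW.
  move=> [i s] [/= iA [st hW]].
  have st' : (s < t)%N by rewrite -(prednK t1) ltnS.
  have [u Eu] := mk i s (ltnW st') (hpW i s hW).
  exists u; split => //; rewrite inE; case: Eu => -> ->; by rewrite iA st'.
have cb : corr (fun u => u \in b) (present B t).
  split.
    by move=> u; rewrite inE => /andP [uB /eqP ut].
  move=> [i s] [/= iB ->].
  have iW : i \notin W by have := (fintype.subsetP hBW) i iB; rewrite finset.in_setC.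
  have [u Eu] := mk i t (ltnSn t) (introT orP (or_introl iW)).
  exists u; split => //; rewrite inE; case: Eu => -> ->; by rewrite iB eqxx.
apply: (ci_transfer _ _ _ H); apply: sigma_corr.
- exact: ca.
- exact: ca.
- exact: corrU cb (ca _).
Qed.
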